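(* Let $F$ be the elementary cellular automaton with rule number 140. For every nonempty finite word $u\in\{0,1\}^*$, the deterministic communication complexity of $\textsc{SInv}_{F,u}$ restricted to inputs of length $n$ is bounded by a constant independent of $n$.
   Context: An elementary cellular automaton (ECA) with rule number $N\in\{0,\dots,255\}$ is the map $F:\{0,1\}^{\mathbb Z}\to\{0,1\}^{\mathbb Z}$ given by $F(x)_i=f(x_{i-1},x_i,x_{i+1})$. Here the local rule $f:\{0,1\}^3\to\{0,1\}$ is determined by $N=\sum_{a,b,c\in\{0,1\}}2^{4a+2b+c}f(a,b,c)$. For a nonempty finite word $u$, $p_u\in\{0,1\}^{\mathbb Z}$ is defined by $(p_u)_i=u_{i\bmod |u|}$. For a finite word $x$, $p_u[x]$ is the configuration equal to $x$ on positions $0,\dots,|x|-1$ and to $p_u$ elsewhere. $\textsc{SInv}_{F,u}$ is the decision problem: on input a finite word $x$, decide whether there is an integer $w$ such that for all $t\ge0$ the set of positions where $F^t(p_u)$ and $F^t(p_u[x])$ differ is contained in an interval of length $w$. For each $n$, it is regarded as a function $\{0,1\}^n\to\{0,1\}$. For a function $g:X\times Y\to Z$, $D(g)$ is the minimal depth of a deterministic two-party protocol computing $g$. In such a protocol, Alice knows $x$ and Bob knows $y$. The protocol is a binary tree: each internal node is labelled by a function of Alice's input only or of Bob's input only, with values in $\{\text{left},\text{right}\}$, and each leaf is labelled by an output value. For $g:\{0,1\}^m\to Z$, set $D(g)=\max_{0\le i<m}D(g_i)$, where $g_i:\{0,1\}^i\times\{0,1\}^{m-i}\to Z$ is $g_i(x,y)=g(xy)$.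 *)

(* Defs.v *)
From Stdlib Require Import ZArith.
From mathcomp Require Import all_boot.
Set Implicit Arguments. Unset Strict Implicit. Unset Printing Implicit Defensive.

(* Configurations in {0,1}^Z, with false = 0 and true = 1. *)
Definition config := Z -> bool.

(* Local rule of ECA number N: f(a,b,c) = bit (4a+2b+c) of N. *)
Definition eca_local (N : nat) (a b c : bool) : bool :=
  odd (N %/ 2 ^ (4 * a + 2 * b + c)).

Definition eca (N : nat) (x : config) : config :=
  fun i => eca_local N (x (i - 1)%Z) (x i) (x (i + 1)%Z).

(* p_u, (p_u)_i = u_{i mod |u|} (Z.modulo is nonnegative for |u| > 0). *)
Definition periodic (u : seq bool) : config :=
  fun i => nth false u (Z.to_nat (Z.modulo i (Z.of_nat (size u)))).

Definition patch (u x : seq bool) : config :=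
  fun i => if (Z.leb 0 i && Z.ltb i (Z.of_nat (size x)))%bool
           then nth false x (Z.to_nat i) else periodic u i.

Definition SInv (N : nat) (u x : seq bool) : Prop :=
  exists w : Z, forall t : nat, exists a : Z, forall i : Z,
    iter t (eca N) (periodic u) i <> iter t (eca N) (patch u x) i ->
    (a <= i < a + w)%Z.

(* Deterministic two-party protocols: binary trees whose internal nodes are
   labelled by a function of Alice's input only or of Bob's input only
   (true = left, false = right), and whose leaves are labelled by outputs. *)
Inductive protocol (X Y O : Type) : Type :=
  | Leaf of O
  | NodeA of (X -> bool) & protocol X Y O & protocol X Y O
  | NodeB of (Y -> bool) & protocol X Y O & protocol X Y O.

Fixpoint run (X Y O : Type) (P : protocol X Y O) (x : X) (y : Y) : O :=
  match P with
  | Leaf o => o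
  | NodeA f l r => if f x then run l x y else run r x y
  | NodeB g l r => if g y then run l x y else run r x y
  end.

Fixpoint depth (X Y O : Type) (P : protocol X Y O) : nat :=
  match P with
  | Leaf _ => 0
  | NodeA _ l r => (maxn (depth l) (depth r)).+1
  | NodeB _ l r => (maxn (depth l) (depth r)).+1
  end.

Definition CC_le (X Y O : Type) (g : X -> Y -> O) (c : nat) : Prop :=
  exists P : protocol X Y O, depth P <= c /\ forall x y, run P x y = g x y.

(* D(g) <= c for g : {0,1}^m -> O, i.e. D(g_i) <= c for all 0 <= i < m,
   with g_i(x, y) = g(xy), x in {0,1}^i, y in {0,1}^(m-i). *)
Definition CC_word_le (O : Type) (m : nat) (g : seq bool -> O) (c : nat) : Prop :=
  forall i : nat, i < m ->
    CC_le (fun (x : i.-tuple bool) (y : (m - i).-tuple bool) => g (x ++ y)) c.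

(* Main.v *)
Require Import Defs.
From Stdlib Require Import ZArith Classical Lia.
From mathcomp Require Import all_boot.

Lemma loc0 a c : eca_local 140 a false c = false.
Proof. by case: a; case: c; vm_compute. Qed.
Lemma loc111 : eca_local 140 true true true = true.
Proof. by vm_compute. Qed.
Lemma loc110 : eca_local 140 true true false = false.
Proof. by vm_compute. Qed.

Lemma iterS' t (y : config) i :
  iter t.+1 (eca 140) y i =
  eca_local 140 (iter t (eca 140) y (i - 1)%Z) (iter t (eca 140) y i)
    (iter t (eca 140) y (i + 1)%Z).
Proof. by rewrite iterS. Qed.

Lemma perm0 (y : config) i : y i = false -> forall t, iter t (eca 140) y i = false.
Proof. move=> H; elim=> [|t IH] //; by rewrite iterS' IH loc0. Qed.

Lemma alltrue (y : config) : (forall i, y i = true) -> forall t i, iter t (eca 140) y i = true.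
Proof. move=> H; elim=> [|t IH] i //; by rewrite iterS' !IH loc111. Qed.

Lemma region (y y' : config) (p q : Z) :
  (p < q)%Z -> y p = false -> y' p = false -> y q = false -> y' q = false ->
  (forall i, (i <= p \/ q <= i)%Z -> y i = y' i) ->
  forall t i, (i <= p \/ q <= i)%Z -> iter t (eca 140) y i = iter t (eca 140) y' i.
Proof.
move=> pq yp y'p yq y'q H; elim=> [|t IH] i Hi; first by apply: H.
have [->|ne1] := Z.eq_dec i p; first by rewrite !perm0.
have [->|ne2] := Z.eq_dec i q; first by rewrite !perm0.
rewrite !iterS' !IH //; lia.
Qed.

Lemma periodic_true u : 0 < size u -> all id u -> forall i, periodic u i = true.
Proof.
move=> hs Hu i; rewrite /periodic.
have Hl : (0 < Z.of_nat (size u))%Z by move/ltP: hs; lia.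
have [h1 h2] := Z.mod_pos_bound i _ Hl.
have Hlt : Z.to_nat (i mod Z.of_nat (size u)) < size u by apply/ltP; lia.
by move/allP: Hu; apply; apply: mem_nth.
Qed.

Lemma patch_out u x i : (i < 0 \/ Z.of_nat (size x) <= i)%Z -> patch u x i = periodic u i.
Proof.
move=> H; rewrite /patch.
case: (Z.leb_spec 0 i); case: (Z.ltb_spec i (Z.of_nat (size x))) => //= *; lia.
Qed.

Lemma erode (y : config) (k : Z) : (forall i, (i < k)%Z -> y i = true) -> y k = false ->
  forall t i, ((i < k - Z.of_nat t)%Z -> iter t (eca 140) y i = true) /\
              ((k - Z.of_nat t <= i <= k)%Z -> iter t (eca 140) y i = false).
Proof.
move=> H1 H2; elim=> [|t IH] i.
  split=> /= h; first by apply: H1; lia.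
  by have -> : i = k by lia.
split=> h; rewrite iterS'.
  rewrite !(proj1 (IH _)) ?loc111 //; lia.
have [e|ne] := Z.eq_dec i (k - Z.of_nat t.+1)%Z.
  rewrite (proj1 (IH _)); last lia.
  rewrite (proj1 (IH i)); last lia.
  rewrite (proj2 (IH (i+1)%Z)); last lia.
  exact: loc110.
by rewrite (proj2 (IH i)) ?loc0 //; lia.
Qed.

Theorem mainTheorem8 (u : seq bool) (hu : 0 < size u) :
  exists c : nat, forall n : nat,
    exists g : seq bool -> bool,
      (forall x : seq bool, size x = n -> (g x = true <-> SInv 140 u x)) /\
      CC_word_le n g c.
Proof.
exists 2 => n.
exists (fun x => ~~ all id u || all id x); split.
  move=> x _.
  case Hu: (all id u) => /=; last first.
    split=> // _.
    have: has (fun b => ~~ id b) u by rewrite has_predC Hu.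
    move=> hh; set j := find (fun b => ~~ id b) u.
    have jlt : j < size u by rewrite -has_find.
    have nj : nth false u j = false by move: (nth_find false hh); rewrite -/j; case: (nth _ _ _).
    set L := Z.of_nat (size u).
    have Lp : (0 < L)%Z by rewrite /L; move/ltP: hu; lia.
    have jL : (0 <= Z.of_nat j < L)%Z by rewrite /L; move/ltP: jlt; lia.
    have per : forall m : Z, periodic u (Z.of_nat j + m * L)%Z = false.
      move=> m; rewrite /periodic -/L Z_mod_plus_full Z.mod_small // Nat2Z.id //.
    set p := (Z.of_nat j + (-1) * L)%Z.
    set q := (Z.of_nat j + Z.of_nat (size x) * L)%Z.
    have pneg : (p < 0)%Z by rewrite /p; lia.
    have qge : (Z.of_nat (size x) <= q)%Z by rewrite /q; nia.
    exists (q - p)%Z => t; exists (p + 1)%Z => i.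
    have Hr := @region (periodic u) (patch u x) p q ltac:(lia) (per _) _ (per _) _ _ t i.
    move=> hd.
    suff : ~ (i <= p \/ q <= i)%Z by lia.
    move=> hi; apply: hd; apply: Hr => //.
    - by rewrite patch_out ?per //; lia.
    - by rewrite patch_out ?per //; lia.
    - by move=> i0 h0; rewrite patch_out //; lia.
  have pt := @periodic_true u hu Hu.
  case Hx: (all id x).
    split=> // _; exists 0%Z => t; exists 0%Z => i.
    have pa : forall i, patch u x i = true.
      move=> i0; rewrite /patch; case: ifP => // /andP[/Z.leb_spec0 h1 /Z.ltb_spec0 h2].
      move/allP: Hx; apply; apply: mem_nth; apply/ltP; apply Nat2Z.inj_lt; rewrite Z2Nat.id; [exact: h2|exact: h1].
    by rewrite !alltrue.
  split=> // [[w Hw]].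
  have hh : has (fun b => ~~ id b) x by rewrite has_predC Hx.
  set k := find (fun b => ~~ id b) x.
  have klt : k < size x by rewrite -has_find.
  have nk : nth false x k = false by move: (nth_find false hh); rewrite -/k; case: (nth _ _ _).
  have Hk1 : forall i, (i < Z.of_nat k)%Z -> patch u x i = true.
    move=> i hi; case: (Z.ltb_spec i 0) => h.
      by rewrite patch_out //; left.
    rewrite /patch; case: ifP => [_|/negbT]; last first.
      rewrite negb_and => /orP[/Z.leb_spec0|/Z.ltb_spec0]; move/ltP: klt; lia.
    have hl : Z.to_nat i < k by apply/ltP; lia.
    by move: (before_find false hl); rewrite -/k; case: (nth _ _ _).
  have Hk2 : patch u x (Z.of_nat k) = false.
    rewrite /patch; case: ifP => [_|/negbT]; first by rewrite Nat2Z.id.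
    rewrite negb_and => /orP[/Z.leb_spec0|/Z.ltb_spec0]; move/ltP: klt; lia.
  have E := @erode _ _ Hk1 Hk2.
  set t := Z.to_nat w.
  have [a Ha] := Hw t.
  have d1 := Ha (Z.of_nat k).
  have d2 := Ha (Z.of_nat k - Z.of_nat t)%Z.
  rewrite (@alltrue _ pt) in d1 d2.
  have e1 := proj2 (E t (Z.of_nat k)) ltac:(lia).
  have e2 := proj2 (E t (Z.of_nat k - Z.of_nat t)%Z) ltac:(lia).
  rewrite e1 in d1; rewrite e2 in d2.
  rewrite (@alltrue _ pt) in d2. have h1 := d1 ltac:(done); have h2 := d2 ltac:(done).
  have : (w <= Z.of_nat t)%Z by rewrite /t; lia.
  lia.
move=> i _.
case Hu: (all id u) => /=.
  exists (NodeA (fun x : i.-tuple bool => all id x)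
            (NodeB (fun y : (n - i).-tuple bool => all id y) (Leaf _ _ true) (Leaf _ _ false))
            (Leaf _ _ false)); split => // x y /=.
  by rewrite all_cat; case: (all id x); case: (all id y).
by exists (Leaf _ _ true).
Qed.
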